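(* An infinite $\frac{7}{3}$-power-free binary word is a fixed point of a non-identity morphism $h:\{0,1\}^*\to\{0,1\}^*$ if and only if it is equal to the Thue–Morse word $\mu^\omega(0)$ or its complement $\mu^\omega(1)$.
   Context: $\mu$ is the Thue–Morse morphism, $\mu(0)=01$, $\mu(1)=10$, and $\mu^\omega(a)$ is the infinite word $\lim_{n\to\infty}\mu^n(a)$ for $a\in\{0,1\}$. The identity morphism maps $0\mapsto 0$, $1\mapsto 1$. An infinite word $\mathbf{w}$ is a fixed point of $h$ if $h(\mathbf{w})=\mathbf{w}$ (with $h$ applied letterwise). For a rational $\alpha\ge 1$, an $\alpha$-power is a word of the form $x^nx'$ with $x$ a nonempty word, $x'$ a prefix of $x$, $n$ a nonnegative integer and $n+|x'|/|x|=\alpha$. A word is $\alpha$-power-free if none of its finite subwords is a $\beta$-power for any rational $\beta\geq\alpha$. *)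

(* Defs.v *)
(* Binary alphabet {0,1} is encoded as bool: 0 = false, 1 = true. *)
From mathcomp Require Import all_boot all_order all_algebra.
Set Implicit Arguments. Unset Strict Implicit. Unset Printing Implicit Defensive.
Import Order.TTheory GRing.Theory Num.Theory.

Definition iword := nat -> bool.

Definition factor (w : iword) (i L : nat) : seq bool := mkseq (fun j => w (i + j)) L.

Definition pref (w : iword) (n : nat) : seq bool := factor w 0 n.

Definition is_power (u : seq bool) (beta : rat) : Prop :=
  exists (x : seq bool) (n : nat) (x' : seq bool),
    [/\ 0 < size x, prefix x' x,
        u = flatten (nseq n x) ++ x' &
        (n%:Q + (size x')%:Q / (size x)%:Q = beta)%R].

Definition power_free (alpha : rat) (w : iword) : Prop :=
  forall (i L : nat) (beta : rat), (alpha <= beta)%R -> ~ is_power (factor w i L) beta.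

Definition morphism := bool -> seq bool.

Definition morph_apply (h : morphism) (s : seq bool) : seq bool := flatten (map h s).

Definition is_identity (h : morphism) : Prop := forall b, h b = [:: b].

(* w is a fixed point of h: h(w) (the limit of h applied to the prefixes of w)
   is an infinite word equal to w. *)
Definition fixed_point (h : morphism) (w : iword) : Prop :=
  (forall n, prefix (morph_apply h (pref w n))
                    (pref w (size (morph_apply h (pref w n))))) /\
  (forall m, exists n, m <= size (morph_apply h (pref w n))).

Definition mu (s : seq bool) : seq bool := flatten (map (fun b => [:: b; ~~ b]) s).

(* mu^omega(a) = lim mu^n(a); since |mu^(i+1)(a)| = 2^(i+1) > i and mu^n(a)
   is a prefix of mu^(n+1)(a), position i of the limit is position i of mu^(i+1)(a). *)
Definition mu_omega (a : bool) : iword := fun i => nth false (iter i.+1 mu [:: a]) i.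

(* Main.v *)
Require Import Defs.
From mathcomp Require Import all_boot all_order all_algebra.
From mathcomp Require Import zify ring lra.
From Stdlib Require Import FunctionalExtensionality.
Set Implicit Arguments. Unset Strict Implicit. Unset Printing Implicit Defensive.
Import Order.TTheory GRing.Theory Num.Theory.

Definition SF (w : iword) := power_free (7%:Q / 3%:Q)%R w.

Lemma nth_factor w i L k : k < L -> nth false (factor w i L) k = w (i + k).
Proof. by move=> H; rewrite /factor nth_mkseq. Qed.

Lemma size_factor w i L : size (factor w i L) = L.
Proof. by rewrite /factor size_mkseq. Qed.

Lemma size_flat_nseq (x : seq bool) n : size (flatten (nseq n x)) = n * size x.
Proof. by elim: n => //= n IH; rewrite size_cat IH mulSn. Qed.

Lemma nth_flat_nseq (x : seq bool) n k : 0 < size x -> k < n * size x ->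
  nth false (flatten (nseq n x)) k = nth false x (k %% size x).
Proof.
move=> Hx; elim: n k => [|n IH] k //=; rewrite mulSn nth_cat => Hk.
case: ifP => H; first by rewrite modn_small.
have H' : size x <= k by rewrite leqNgt H.
by rewrite IH; [rewrite -{2}(subnK H') modnDr | lia].
Qed.

Lemma periodic_nth (y : seq bool) p : 0 < p -> p <= size y ->
  (forall k, k + p < size y -> nth false y k = nth false y (k + p)) ->
  forall k, k < size y -> nth false y k = nth false (take p y) (k %% p).
Proof.
move=> Hp Hpy Hper k; elim/ltn_ind: k => k IH Hk.
case: (ltnP k p) => Hkp.
  by rewrite modn_small // nth_take.
have -> : k = (k - p) + p by rewrite subnK.
rewrite modnDr -Hper; [apply: IH; lia | lia].
Qed.

Lemma rat_split (L p : nat) : 0 < p ->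
  (((L %/ p)%N)%:Q + ((L %% p)%N)%:Q / p%:Q = L%:Q / p%:Q)%R.
Proof.
move=> Hp; rewrite {3}(divn_eq L p).
have Hp' : (p%:Q != 0)%R by rewrite intr_eq0 eqz_nat -lt0n.
rewrite -!pmulrn natrD natrM /=; rewrite -pmulrn in Hp'.
by field.
Qed.

Lemma periodic_power (y : seq bool) p : 0 < p -> p <= size y ->
  (forall k, k + p < size y -> nth false y k = nth false y (k + p)) ->
  is_power y ((size y)%:Q / p%:Q)%R.
Proof.
move=> Hp Hpy Hper.
set x := take p y.
have Hx : size x = p by rewrite size_take_min; lia.
exists x, (size y %/ p), (take (size y %% p) x); split.
- by rewrite Hx.
- by rewrite prefixE size_take Hx ltn_pmod.
- apply: (@eq_from_nth _ false).
    by rewrite size_cat size_flat_nseq size_take Hx ltn_pmod // -divn_eq.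
  move=> k Hk; rewrite (periodic_nth Hp Hpy Hper Hk) nth_cat size_flat_nseq Hx.
  case: ifP => H; first by rewrite nth_flat_nseq Hx.
  rewrite (@nth_take (size y %% p) _ false (k - size y %/ p * p)); last first.
    have := divn_eq (size y) p; lia.
  have Hge : size y %/ p * p <= k by rewrite leqNgt H.
  have Hq : k %/ p = size y %/ p.
    apply/eqP; rewrite eqn_leq; apply/andP; split.
      by apply: leq_div2r; lia.
    by have := leq_div2r p Hge; rewrite mulnK.
  have -> : k - size y %/ p * p = k %% p by rewrite {1}(divn_eq k p) Hq addKn.
  done.
- by rewrite size_take Hx ltn_pmod // rat_split.
Qed.

Definition perb (s : seq bool) i L p :=
  all (fun k => nth false s (i + k) == nth false s (i + k + p)) (iota 0 (L - p)).

Definition pfb (s : seq bool) :=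
  all (fun i => all (fun p => (i + (7 * p + 2) %/ 3 <= size s) ==> ~~ perb s i ((7 * p + 2) %/ 3) p)
     (iota 1 (size s))) (iota 0 (size s)).

Lemma factor_sub w i0 L0 i L k : i + L <= L0 -> k < L ->
  nth false (factor w i0 L0) (i + k) = nth false (factor w (i0 + i) L) k.
Proof. by move=> H1 H2; rewrite !nth_factor ?addnA //; lia. Qed.

Lemma rat_le (L p : nat) : 0 < p -> 7 * p <= 3 * L -> (7%:Q / 3%:Q <= L%:Q / p%:Q)%R.
Proof.
move=> Hp H7; rewrite -!pmulrn ler_pdivlMr ?ltr0n //.
rewrite mulrAC ler_pdivrMr ?ltr0n // -!natrM ler_nat [L * _]mulnC; exact: H7.
Qed.

Lemma SF_pfb w i0 L0 : SF w -> pfb (factor w i0 L0).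
Proof.
move=> Hw; apply/allP => i; rewrite mem_iota add0n size_factor => Hi.
apply/allP => p; rewrite mem_iota => /andP [Hp1 Hp2].
set L := (7 * p + 2) %/ 3.
have HL3 : 7 * p <= 3 * L by rewrite /L; have := divn_eq (7 * p + 2) 3; have := ltn_pmod (7 * p + 2) (isT : 0 < 3); lia.
apply/implyP => HL'; apply/negP => /allP Hper.
apply: (Hw (i0 + i) L (L%:Q / p%:Q)%R); first exact: rat_le.
have HH := @periodic_power (factor w (i0 + i) L) p Hp1. rewrite size_factor in HH. apply: HH.
  by clear -HL3 Hp1; lia.
move=> k Hk.
have := Hper k; rewrite mem_iota add0n => /(_ ltac:(clear -Hk; lia)) /eqP.
by rewrite -addnA (@factor_sub w i0 L0 i L k) ?(@factor_sub w i0 L0 i L (k+p)) //; clear -HL' Hk; lia.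
Qed.

Fixpoint words n : seq (seq bool) :=
  if n is n'.+1 then map (cons false) (words n') ++ map (cons true) (words n')
  else [:: [::]].

Lemma words_mem u : u \in words (size u).
Proof. by elim: u => //= b u IH; case: b; rewrite mem_cat map_f ?orbT. Qed.

Lemma win n (P : seq bool -> bool) : all (fun u => pfb u ==> P u) (words n) ->
  forall w i, SF w -> P (factor w i n).
Proof.
move=> /allP H w i Hw; have := H (factor w i n).
by rewrite -{2}(size_factor w i n) words_mem (SF_pfb i n Hw) => /(_ isT).
Qed.

Definition nb (u : seq bool) k := nth false u k.

Lemma F_ccc : all (fun u => pfb u ==> ~~ ((nb u 0 == nb u 1) && (nb u 1 == nb u 2))) (words 3).
Proof. by vm_compute. Qed.

Lemma F_par : all (fun u => pfb u ==> ((nb u 1 == nb u 2) ==>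
   [&& nb u 2 != nb u 3, nb u 4 != nb u 5 & (nb u 3 == nb u 4) || (nb u 5 == nb u 6)])) (words 7).
Proof. by vm_compute. Qed.

Definition hascc c u := has (fun k => (nb u k == c) && (nb u k.+1 == c)) (iota 0 8).

Lemma F_cc : all (fun u => pfb u ==> (hascc false u && hascc true u)) (words 9).
Proof. by vm_compute. Qed.

Definition hasdbl (u : seq bool) := has (fun k => nb u k == nb u k.+1) (iota 0 (size u).-1).

Lemma F_alt5 : all (fun u => pfb u ==> hasdbl u) (words 5).
Proof. by vm_compute. Qed.

Lemma no_ccc w i : SF w -> w i = w i.+1 -> w i.+1 = w i.+2 -> False.
Proof.
move=> Hw H1 H2; have := win F_ccc i Hw; rewrite /nb !nth_factor // !addn0 !addn1 !addn2.
by rewrite H1 H2 !eqxx.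
Qed.

Lemma par_step w i : SF w -> 0 < i -> w i = w i.+1 ->
  [/\ w i.+1 != w i.+2, w i.+3 != w i.+4 & (w i.+2 == w i.+3) || (w i.+4 == w i.+4.+1)].
Proof.
move=> Hw Hi H; have := win F_par i.-1 Hw; rewrite /nb !nth_factor //.
have E : forall k, i.-1 + k.+1 = i + k by move=> k; lia.
rewrite !E !addn0 !addn1 H eqxx /=.
by rewrite !addnS !addn0 => /and3P [-> -> ->].
Qed.

Lemma par w i j : SF w -> 0 < i -> i <= j -> w i = w i.+1 -> w j = w j.+1 ->
  ~~ odd (j - i).
Proof.
move=> Hw; move Ed: (j - i) => d; elim/ltn_ind: d i j Ed => d IH i j Ed Hi Hij Hdi Hdj.
subst d.
have [H1 H3 H24] := par_step Hw Hi Hdi.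
case: (ltngtP j i.+4) => Hj.
- have : j \in [:: i; i.+1; i.+2; i.+3] by rewrite !inE; lia.
  rewrite !inE => /or4P [] /eqP Ej; subst j.
  + by rewrite subnn.
  + by move: H1; rewrite Hdj eqxx.
  + by have -> : i.+2 - i = 2 by lia.
  + by move: H3; rewrite Hdj eqxx.
- case/orP: H24 => /eqP H24.
  + have := IH (j - i.+2) _ i.+2 j erefl _ _ H24 Hdj.
    have -> : j - i = (j - i.+2).+2 by lia.
    by move=> /(_ ltac:(clear -Hi Hj; lia) ltac:(clear -Hi Hj; lia) ltac:(clear -Hi Hj; lia)); rewrite /= negbK.
  + have := IH (j - i.+4) _ i.+4 j erefl _ _ H24 Hdj.
    have -> : j - i = (j - i.+4).+4 by lia.
    by move=> /(_ ltac:(clear -Hi Hj; lia) ltac:(clear -Hi Hj; lia) ltac:(clear -Hi Hj; lia)); rewrite /= !negbK.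
- by subst j; have -> : i.+4 - i = 4 by lia.
Qed.

Lemma par_eq w i j : SF w -> 0 < i -> 0 < j -> w i = w i.+1 -> w j = w j.+1 ->
  odd i = odd j.
Proof.
move=> Hw Hi Hj Hdi Hdj; case: (leqP i j) => H.
  have -> : odd j = odd (j - i) (+) odd i by rewrite -oddD subnK.
  by have := par Hw Hi H Hdi Hdj => /negbTE ->.
have H' : j <= i by lia.
have -> : odd i = odd (i - j) (+) odd j by rewrite -oddD subnK.
by have := par Hw Hj H' Hdj Hdi => /negbTE ->.
Qed.

Lemma ex_cc w c N : SF w -> exists j, [/\ N < j, w j = c & w j.+1 = c].
Proof.
move=> Hw; have := win F_cc N.+1 Hw => /andP [H0 H1].
have : hascc c (factor w N.+1 9) by case: c.
case/hasP => k; rewrite mem_iota add0n => /andP [_ Hk] /andP [/eqP E1 /eqP E2].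
exists (N.+1 + k); split; first by lia.
  by move: E1; rewrite /nb nth_factor //; lia.
by move: E2; rewrite /nb nth_factor ?addnS //; lia.
Qed.

Lemma cc_ctx w j c : SF w -> 0 < j -> w j = c -> w j.+1 = c -> w j.-1 = ~~ c /\ w j.+2 = ~~ c.
Proof.
move=> Hw Hj H1 H2; split.
  case E: (w j.-1); case: c H1 H2 => H1 H2 //=; exfalso;
  by apply: (no_ccc (i:=j.-1) Hw); rewrite prednK // ?H1 ?H2.
case E: (w j.+2); case: c H1 H2 => H1 H2 //=; exfalso;
by apply: (no_ccc (i:=j) Hw); rewrite ?H1 ?H2.
Qed.

Definition ms (phi : morphism) (w : iword) j := size (morph_apply phi (pref w j)).

Definition rep (phi : morphism) (w z : iword) :=
  forall j k, k < size (phi (w j)) -> z (ms phi w j + k) = nth false (phi (w j)) k.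

Lemma pref_S w j : pref w j.+1 = rcons (pref w j) (w j).
Proof. by rewrite /pref /factor mkseqS add0n. Qed.

Lemma ma_rcons phi s a : morph_apply phi (rcons s a) = morph_apply phi s ++ phi a.
Proof. by rewrite /morph_apply map_rcons flatten_rcons. Qed.

Lemma msS phi w j : ms phi w j.+1 = ms phi w j + size (phi (w j)).
Proof. by rewrite /ms pref_S ma_rcons size_cat. Qed.

Lemma ms0 phi w : ms phi w 0 = 0.
Proof. by []. Qed.

Lemma ms_ge phi w j : (forall c, 0 < size (phi c)) -> j <= ms phi w j.
Proof.
move=> Hne; elim: j => // j IH; rewrite msS; have := Hne (w j); lia.
Qed.

Lemma ms_even phi w j : (forall c, ~~ odd (size (phi c))) -> ~~ odd (ms phi w j).
Proof.
move=> He; elim: j => // j IH; rewrite msS oddD.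
by move: IH (He (w j)) => /negbTE -> /negbTE ->.
Qed.

Lemma rep_prefix phi w z : rep phi w z -> forall n k, k < ms phi w n ->
  z k = nth false (morph_apply phi (pref w n)) k.
Proof.
move=> Hr; elim=> [|n IH] k //; rewrite msS pref_S ma_rcons nth_cat => Hk.
case: ifP => H; first by apply: IH.
rewrite -Hr; last by rewrite /ms in H Hk; lia.
by rewrite /ms subnKC // leqNgt H.
Qed.

Lemma hasdblP (s : seq bool) : hasdbl s -> exists o, o.+1 < size s /\ nth false s o = nth false s o.+1.
Proof.
case/hasP => o; rewrite mem_iota add0n => /andP [_ Ho] /eqP E; exists o; split => //; lia.
Qed.

Lemma rep_dbl phi w z j o : rep phi w z -> o.+1 < size (phi (w j)) ->
  nth false (phi (w j)) o = nth false (phi (w j)) o.+1 ->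
  z (ms phi w j + o) = z (ms phi w j + o).+1.
Proof. by move=> Hr Ho E; rewrite -addnS !Hr //; lia. Qed.

Lemma even_one phi w z d : SF w -> SF z -> rep phi w z -> (forall c, 0 < size (phi c)) ->
  hasdbl (phi d) -> ~~ odd (size (phi d)).
Proof.
move=> Hw Hz Hr Hne /hasdblP [o [Ho Eo]].
have [j [Hj E1 E2]] := ex_cc d 0 Hw.
have D1 := @rep_dbl phi w z j o Hr; rewrite E1 in D1; have {}D1 := D1 Ho Eo.
have D2 := @rep_dbl phi w z j.+1 o Hr; rewrite E2 in D2; have {}D2 := D2 Ho Eo.
have := ms_ge w j Hne => Hm.
have := par_eq Hz _ _ D1 D2; rewrite msS E1 -addnA [size _ + o]addnC addnA.
move=> /(_ ltac:(clear -Hj Hm; lia) ltac:(clear -Hj Hm; lia)) H; apply/negP => Hodd; move: H.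
by rewrite !oddD Hodd; case: (odd (ms phi w j)); case: (odd o).
Qed.

Lemma step4 w c : SF w ->
  (forall j, 0 < j -> w j = ~~ c -> w j.+1 = c -> w j.+2 = ~~ c -> False) ->
  forall i, 0 < i -> w i = c -> w (i + 1) = c ->
  [/\ w (i + 2) = ~~ c, w (i + 3) = ~~ c, w (i + 4) = c & w (i + 5) = c].
Proof.
move=> Hw nodcd i Hi E0 E1; rewrite addn1 in E1.
have [_ E2] := cc_ctx Hw Hi E0 E1.
have E3 : w i.+3 = ~~ c.
  case E3: (w i.+3); case E4: (w i.+4); case: c E0 E1 E2 nodcd => E0 E1 E2 nodcd //=.
  all: try first [ by exfalso; apply: (nodcd i.+2) => //; rewrite ?E2 ?E3 ?E4
        | by have := par_eq Hw Hi (isT : 0 < i.+3) (etrans E0 (esym E1)) (etrans E3 (esym E4));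
             rewrite /= negbK; case: (odd i) ].
have E4 : w i.+4 = c.
  case E4: (w i.+4); case: c E0 E1 E2 E3 nodcd => E0 E1 E2 E3 nodcd //=;
  by exfalso; apply: (no_ccc (i := i.+2) Hw); rewrite ?E2 ?E3 ?E4.
have E5 : w i.+4.+1 = c.
  case E5: (w i.+4.+1); case: c E0 E1 E2 E3 E4 nodcd => E0 E1 E2 E3 E4 nodcd //=;
  by exfalso; apply: (nodcd i.+3) => //; rewrite ?E3 ?E4 ?E5.
have -> : i + 5 = i.+4.+1 by lia.
by rewrite addn2 addn3 addn4.
Qed.


Lemma even_other phi w z d : SF w -> SF z -> rep phi w z -> (forall c, 0 < size (phi c)) ->
  hasdbl (phi d) -> ~~ odd (size (phi (~~ d))).
Proof.
move=> Hw Hz Hr Hne Hd.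
have Ed := even_one Hw Hz Hr Hne Hd.
apply/negP => Hodd.
have [o [Ho Eo]] := hasdblP Hd.
have nodcd : forall j, 0 < j -> w j = ~~ (~~ d) -> w j.+1 = ~~ d -> w j.+2 = ~~ (~~ d) -> False.
  move=> j Hj; rewrite negbK => E0 E1 E2.
  have D1 := @rep_dbl phi w z j o Hr; rewrite E0 in D1; have {}D1 := D1 Ho Eo.
  have D2 := @rep_dbl phi w z j.+2 o Hr; rewrite E2 in D2; have {}D2 := D2 Ho Eo.
  have := ms_ge w j Hne => Hm.
  have := par_eq Hz _ _ D1 D2; rewrite !msS E0 E1.
  move=> /(_ ltac:(clear -Hj Hm; lia) ltac:(clear -Hj Hm; lia)); rewrite -!addnA !oddD Hodd.
  by move: Ed => /negbTE ->; case: (odd (ms phi w j)); case: (odd o).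
have [i [Hi F0 F1]] := ex_cc (~~ d) 0 Hw.
have F1' : w (i + 1) = ~~ d by rewrite addn1.
have [F2 F3 F4 F5] := step4 Hw nodcd Hi F0 F1'.
have F5' : w (i + 4 + 1) = ~~ d by rewrite -addnA.
have [G2 G3 G4 G5] := step4 Hw nodcd (ltac:(clear -Hi; lia) : 0 < i + 4) F4 F5'.
have G5' : w (i + 4 + 4 + 1) = ~~ d by rewrite -addnA.
have [H2 H3 H4 H5] := step4 Hw nodcd (ltac:(clear -Hi; lia) : 0 < i + 4 + 4) G4 G5'.
rewrite -!addnA in G2 G3 G4 G5 H2 H3 H4 H5.
have G2' : w (i + 6) = ~~ ~~ d := G2.
have G3' : w (i + 7) = ~~ ~~ d := G3.
have G4' : w (i + 8) = ~~ d := G4.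
have G5'' : w (i + 9) = ~~ d := G5.
have H2' : w (i + 10) = ~~ ~~ d := H2.
have H3' : w (i + 11) = ~~ ~~ d := H3.
have := SF_pfb i 12 Hw.
rewrite /factor /mkseq /= addn0 F0 F1' F2 F3 F4 F5 G2' G3' G4' G5'' H2' H3'.
by destruct d; vm_compute.
Qed.

Lemma evenD phi w z d : SF w -> SF z -> rep phi w z -> (forall c, 0 < size (phi c)) ->
  hasdbl (phi d) -> forall c, ~~ odd (size (phi c)).
Proof.
move=> Hw Hz Hr Hne Hd c; case: (eqVneq c d) => [->|/negPf H].
  exact: even_one Hw Hz Hr Hne Hd.
have -> : c = ~~ d by case: c d H {Hd} => [] [].
exact: even_other Hw Hz Hr Hne Hd.
Qed.

Lemma mu_cons a s : mu (a :: s) = [:: a, ~~ a & mu s].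
Proof. by []. Qed.

Lemma mu_cat a b : mu (a ++ b) = mu a ++ mu b.
Proof. by rewrite /mu map_cat flatten_cat. Qed.

Lemma size_mu s : size (mu s) = (size s).*2.
Proof. by elim: s => //= a s IH; rewrite IH doubleS. Qed.

Lemma mu_flat_nseq n x : mu (flatten (nseq n x)) = flatten (nseq n (mu x)).
Proof. by elim: n => //= n IH; rewrite mu_cat IH. Qed.

Lemma nth_mu s k : k < (size s).*2 ->
  nth false (mu s) k = if odd k then ~~ nth false s k./2 else nth false s k./2.
Proof.
elim: s k => [|a s IH] k //.
case: k => [|[|k]] //= Hk; rewrite IH /= ?negbK //.
Qed.

Lemma mu_prefix x' x : prefix x' x -> prefix (mu x') (mu x).
Proof. by move=> /prefixP [t ->]; rewrite mu_cat prefix_prefix. Qed.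

Definition subw o (z : iword) : iword := fun k => z (o + k.*2).

Lemma SF_sub z o : SF z -> (forall k, z (o + k.*2).+1 = ~~ z (o + k.*2)) -> SF (subw o z).
Proof.
move=> Hz Hal i L beta Hb [x [n [x' [Hx Hpre Heq Hrat]]]].
apply: (Hz (o + i.*2) L.*2 beta Hb).
have E : factor z (o + i.*2) L.*2 = mu (factor (subw o z) i L).
  apply: (@eq_from_nth _ false); first by rewrite size_mu !size_factor.
  move=> k; rewrite size_factor => Hk.
  rewrite nth_mu ?size_factor // nth_factor // nth_factor; last by rewrite -ltn_double; move: Hk; rewrite -[k in k < _](odd_double_half k); case: (odd k) => /=; lia.
  rewrite /subw doubleD addnA -[k in z (_ + k)](odd_double_half k).
  case: (odd k) => /=.
    change (nat_of_bool true) with 1.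
    have -> : o + i.*2 + (1 + k./2.*2) = (o + (i + k./2).*2).+1 by rewrite doubleD; lia.
    by rewrite Hal; congr (~~ z _); rewrite doubleD; lia.
  by rewrite add0n.
rewrite E Heq mu_cat mu_flat_nseq.
exists (mu x), n, (mu x'); split => //.
- by rewrite size_mu double_gt0.
- exact: mu_prefix.
- have Hx' : ((size x)%:Q != 0)%R by rewrite intr_eq0 eqz_nat -lt0n.
  rewrite !size_mu -Hrat -!pmulrn -!muln2 !natrM.
  rewrite -!pmulrn in Hx'.
  by field; rewrite Hx'.
Qed.

Definition sub o (s : seq bool) := mkseq (fun k => nth false s (o + k.*2)) (size s)./2.
Definition phis o (phi : morphism) : morphism := fun c => sub o (phi c).
Definition lastb (s : seq bool) := nth false s (size s).-1.

Lemma size_sub o s : size (sub o s) = (size s)./2.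
Proof. by rewrite /sub size_mkseq. Qed.

Lemma even_half n : ~~ odd n -> (n./2).*2 = n.
Proof. by move=> H; rewrite -{2}(odd_double_half n) (negbTE H). Qed.

Lemma ms_double o phi w j : (forall c, ~~ odd (size (phi c))) ->
  (ms (phis o phi) w j).*2 = ms phi w j.
Proof.
move=> He; elim: j => // j IH; rewrite !msS doubleD IH size_sub even_half //.
Qed.

Lemma rep_sub phi w z o : rep phi w z -> (forall c, ~~ odd (size (phi c))) -> o <= 1 ->
  rep (phis o phi) w (subw o z).
Proof.
move=> Hr He Ho j k; rewrite size_sub => Hk.
have Hk' : o + k.*2 < size (phi (w j)).
  by rewrite -(even_half (He (w j))); move: Hk; rewrite -ltn_double; lia.
rewrite /subw /phis /sub nth_mkseq // doubleD (ms_double o w j He).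
by rewrite -Hr // addnCA.
Qed.

Lemma lastb_sub1 s : ~~ odd (size s) -> 0 < size s -> lastb (sub 1 s) = lastb s.
Proof.
move=> He Hp; rewrite /lastb size_sub /sub nth_mkseq; last first.
  by move: (even_half He); set m := (size s)./2; rewrite -!muln2; lia.
congr nth; move: (even_half He); set m := (size s)./2; rewrite -!muln2; lia.
Qed.

Lemma lastb_sub0 s : ~~ odd (size s) -> 0 < size s -> lastb (sub 0 s) = nth false s (size s).-2.
Proof.
move=> He Hp; rewrite /lastb size_sub /sub nth_mkseq; last first.
  by move: (even_half He); set m := (size s)./2; rewrite -!muln2; lia.
congr nth; move: (even_half He); set m := (size s)./2; rewrite -!muln2; lia.
Qed.

Lemma bool_neq (a b : bool) : a != b -> a = ~~ b.
Proof. by case: a; case: b. Qed.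

Lemma halving phi w z : SF w -> SF z -> rep phi w z -> (forall c, 0 < size (phi c)) ->
  (forall c, ~~ odd (size (phi c))) ->
  (SF (subw 0 z) /\ rep (phis 0 phi) w (subw 0 z) /\
   (forall c k, k.*2.+1 < size (phi c) -> nth false (phi c) k.*2.+1 = ~~ nth false (phi c) k.*2) /\
   (forall k, z k.*2.+1 = ~~ z k.*2))
  \/
  (SF (subw 1 z) /\ rep (phis 1 phi) w (subw 1 z) /\ lastb (phis 1 phi false) = lastb (phis 1 phi true)).
Proof.
move=> Hw Hz Hr Hne He.
have [i0 [Hi0 Z1 Z2]] := ex_cc false 0 Hz.
have D0 : z i0 = z i0.+1 by rewrite Z1 Z2.
have Hpar : forall i, 0 < i -> z i = z i.+1 -> odd i = odd i0.
  by move=> i Hi Di; apply: (par_eq Hz Hi Hi0 Di D0).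
have Hev := fun j => ms_even w j He.
have Hge := fun j => ms_ge w j Hne.
have H2 : forall c, 1 < size (phi c).
  by move=> c; have := He c; have := Hne c; case: (size (phi c)) => [|[|n]].
case Ho: (odd i0); [left | right].
- have Hal : forall k, z (0 + k.*2).+1 = ~~ z (0 + k.*2).
    move=> k; rewrite add0n; apply: bool_neq; apply/negP => /eqP Dk.
    case: k Dk => [|k] Dk.
      have [j [Hj Ej _]] := ex_cc (w 0) 0 Hw.
      have E0 : z (ms phi w j) = z 0 by rewrite -[ms phi w j]addn0 Hr Ej // -(Hr 0 0).
      have E1 : z (ms phi w j).+1 = z 1 by rewrite -addn1 Hr Ej // -(Hr 0 1).
      have Dm : z (ms phi w j) = z (ms phi w j).+1 by rewrite E0 E1 -[1]/(0.*2.+1) Dk.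
      have := Hpar (ms phi w j) ltac:(clear -Hge Hj; have := Hge j; lia) Dm.
      by rewrite Ho; move: (Hev j) => /negbTE ->.
    by have := Hpar k.+1.*2 isT (esym Dk); rewrite odd_double Ho.
  split; first exact: SF_sub.
  split; first exact: rep_sub.
  split; last by move=> k; have := Hal k; rewrite add0n.
  move=> c k Hk; have [j [Hj Ej _]] := ex_cc c 0 Hw.
  have := Hal ((ms phi w j)./2 + k).
  rewrite add0n doubleD even_half // -addnS (Hr j k.*2.+1) ?(Hr j k.*2) Ej //; lia.
- have Hal : forall k, z (1 + k.*2).+1 = ~~ z (1 + k.*2).
    move=> k; apply: bool_neq; apply/negP => /eqP Dk.
    by have := Hpar (1 + k.*2) isT (esym Dk); rewrite oddD odd_double Ho.
  split; first exact: SF_sub.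
  split; first exact: rep_sub.
  have Junc : forall j, nth false (phi (w j.+1)) 0 = ~~ lastb (phi (w j)).
    move=> j.
    have Hm : 0 < ms phi w j.+1 by have := Hge j.+1; lia.
    have Ev := even_half (Hev j.+1).
    have Hs := H2 (w j).
    set m := ((ms phi w j.+1)./2).-1.
    have Em : ms phi w j.+1 = (1 + m.*2).+1.
      by move: Ev; rewrite /m; set q := (ms phi w j.+1)./2; rewrite -!muln2; lia.
    have A1 : z (ms phi w j.+1) = nth false (phi (w j.+1)) 0.
      by rewrite -[ms phi w j.+1]addn0 Hr.
    have A2 : z (1 + m.*2) = lastb (phi (w j)).
      have -> : 1 + m.*2 = ms phi w j + (size (phi (w j))).-1.
        by move: Em; rewrite msS -!muln2; lia.
      by rewrite Hr //; lia.
    have A3 := Hal m; rewrite -Em in A3.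
    by rewrite -A1 A3 A2.
  have [j [Hj Ej Ej1]] := ex_cc false 0 Hw.
  have [Ejm _] := cc_ctx Hw Hj Ej Ej1.
  have J1 := Junc j; have J2 := Junc j.-1.
  rewrite Ej1 Ej in J1; rewrite prednK // Ej Ejm in J2.
  rewrite /phis !lastb_sub1 ?He ?Hne //.
  by move: J1 J2 => ->; case: (lastb _); case: (lastb _).
Qed.

Definition alts : seq (seq bool) :=
  [:: [:: false]; [:: true]; [:: false; true]; [:: true; false];
      [:: false; true; false]; [:: true; false; true];
      [:: false; true; false; true]; [:: true; false; true; false]].

Lemma alts_mem s : 0 < size s -> size s <= 4 -> ~~ hasdbl s -> s \in alts.
Proof.
case: s => [|a [|b [|c [|d [|e s]]]]] //= _ _;
repeat match goal with x : bool |- _ => destruct x end; vm_compute; done.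
Qed.

Lemma F_alts : all (fun s => ~~ pfb (lastb s :: s ++ s)) alts.
Proof. by vm_compute. Qed.

Lemma rep_factor2 phi w z j : rep phi w z -> (forall c, 0 < size (phi c)) -> 0 < j ->
  factor z (ms phi w j).-1 (1 + size (phi (w j)) + size (phi (w j.+1))) =
  lastb (phi (w j.-1)) :: phi (w j) ++ phi (w j.+1).
Proof.
move=> Hr Hne Hj.
have Em : ms phi w j = ms phi w j.-1 + size (phi (w j.-1)) by rewrite -msS prednK.
have Hp := Hne (w j.-1).
apply: (@eq_from_nth _ false); first by rewrite size_factor /= size_cat; lia.
move=> k; rewrite size_factor => Hk; rewrite nth_factor //.
case: k Hk => [|k] Hk.
  by rewrite addn0 Em /lastb -Hr; [congr z; lia | lia].
rewrite /= nth_cat; case: ifP => H1.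
  by rewrite -Hr //; congr z; lia.
rewrite -Hr; last by move: H1 Hk; lia.
by rewrite msS; congr z; move: H1; lia.
Qed.

Lemma alt_small phi w z c : SF w -> SF z -> rep phi w z -> ~~ hasdbl (phi c) -> size (phi c) <= 4.
Proof.
move=> Hw Hz Hr Hd; rewrite leqNgt; apply/negP => H5.
have [j [_ Ej _]] := ex_cc c 0 Hw.
have := win F_alt5 (ms phi w j) Hz.
case/hasP => k; rewrite mem_iota add0n size_factor => /andP [_ Hk] /eqP E.
move: Hd => /negP; apply; apply/hasP; exists k.
  by rewrite mem_iota add0n; lia.
move: E; rewrite /nb !nth_factor // ?(Hr j k) ?Ej //; try lia.
rewrite (Hr j k.+1) Ej; [by move=> -> | lia].
Qed.

Lemma main_ne n : forall phi w z, size (phi false) + size (phi true) <= n ->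
  SF w -> SF z -> rep phi w z -> (forall c, 0 < size (phi c)) ->
  lastb (phi false) = lastb (phi true) -> False.
Proof.
elim: n => [|n IH] phi w z Hn Hw Hz Hr Hne Hl.
  by have := Hne false; lia.
case Hd: (hasdbl (phi false) || hasdbl (phi true)).
  have He : forall c, ~~ odd (size (phi c)).
    by case/orP: Hd => Hd; apply: (evenD Hw Hz Hr Hne Hd).
  have H2 : forall c, 1 < size (phi c).
    by move=> c; have := He c; have := Hne c; case: (size (phi c)) => [|[|m]].
  have Hne' : forall o c, 0 < size (phis o phi c).
    by move=> o c; rewrite size_sub; have := H2 c; case: (size (phi c)) => [|[|m]].
  have Hn' : forall o, size (phis o phi false) + size (phis o phi true) <= n.
    move=> o; rewrite !size_sub; have := H2 false; have := H2 true.
    move: Hn; set a := size (phi false); set b := size (phi true).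
    move: (even_half (He false)) (even_half (He true)); rewrite -/a -/b.
    set a2 := a./2; set b2 := b./2; rewrite -!muln2; lia.
  case: (halving Hw Hz Hr Hne He) => [[Hz' [Hr' [Hal _]]] | [Hz' [Hr' Hl']]].
    apply: (IH (phis 0 phi) w (subw 0 z) (Hn' 0) Hw Hz' Hr' (Hne' 0)).
    rewrite /phis !lastb_sub0 ?He ?Hne //.
    have Hc : forall c, nth false (phi c) (size (phi c)).-2 = ~~ lastb (phi c).
      move=> c; rewrite /lastb.
      have := Hal c ((size (phi c))./2.-1).
      have Ev := even_half (He c); have Hs := H2 c.
      have -> : ((size (phi c))./2.-1).*2 = (size (phi c)).-2.
        by move: Ev Hs; set q := (size (phi c))./2; rewrite -!muln2; lia.
      have -> : ((size (phi c)).-2).+1 = (size (phi c)).-1 by lia.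
      by move=> /(_ ltac:(lia)) ->; rewrite negbK.
    by rewrite !Hc Hl.
  exact: (IH (phis 1 phi) w (subw 1 z) (Hn' 1) Hw Hz' Hr' (Hne' 1) Hl').
move/negbT: Hd; rewrite negb_or => /andP [Hd0 _].
have Hin := alts_mem (Hne false) (alt_small Hw Hz Hr Hd0) Hd0.
have [j [Hj Ej Ej1]] := ex_cc false 0 Hw.
have [Ejm _] := cc_ctx Hw Hj Ej Ej1.
have := SF_pfb (ms phi w j).-1 (1 + size (phi (w j)) + size (phi (w j.+1))) Hz.
rewrite rep_factor2 // Ej Ej1 Ejm /= -Hl.
by move: (allP F_alts _ Hin) => /negbTE ->.
Qed.

Definition mk2 (k0 k1 : seq bool) : morphism := fun b => if b then k1 else k0.

Definition consistent (u v : seq bool) :=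
  take (minn (size u) (size v)) u == take (minn (size u) (size v)) v.

Definition fp_ok (k0 k1 : seq bool) :=
  [|| ~~ odd (size k0) && ~~ odd (size k1), (k0 == [:: false]) && (k1 == [:: true]) |
   all (fun u => pfb u ==> pfb (morph_apply (mk2 k0 k1) u) ==> ~~ consistent u (morph_apply (mk2 k0 k1) u))
     (words 5)].

Lemma F_fp : all (fun k0 => all (fun k1 => fp_ok k0 k1) alts) alts.
Proof. by vm_compute. Qed.

Lemma factor_eq (w : iword) i (l : seq bool) :
  (forall k, k < size l -> w (i + k) = nth false l k) -> factor w i (size l) = l.
Proof.
move=> H; apply: (@eq_from_nth _ false); first by rewrite size_factor.
by move=> k; rewrite size_factor => Hk; rewrite nth_factor // H.
Qed.

Lemma even_fp K w : SF w -> rep K w w -> (forall c, 0 < size (K c)) -> ~ is_identity K ->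
  forall c, ~~ odd (size (K c)).
Proof.
move=> Hw Hr Hne Hid.
case Hd: (hasdbl (K false) || hasdbl (K true)).
  by case/orP: Hd => Hd; apply: (evenD Hw Hw Hr Hne Hd).
move/negbT: Hd; rewrite negb_or => /andP [Hd0 Hd1].
have In0 := alts_mem (Hne false) (alt_small Hw Hw Hr Hd0) Hd0.
have In1 := alts_mem (Hne true) (alt_small Hw Hw Hr Hd1) Hd1.
have := allP (allP F_fp _ In0) _ In1; rewrite /fp_ok.
case/or3P.
- by case/andP => H0 H1 [].
- case/andP => /eqP H0 /eqP H1; exfalso; apply: Hid; by case.
- have Hm : pref w 5 \in words 5 by rewrite -[X in words X](size_factor w 0 5) words_mem.
  move=> /allP /(_ _ Hm).
  have EK : morph_apply (mk2 (K false) (K true)) (pref w 5) = morph_apply K (pref w 5).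
    by rewrite /morph_apply; congr flatten; apply: eq_map => -[].
  rewrite EK; set v := morph_apply K (pref w 5).
  have Hv : forall k, k < size v -> w (0 + k) = nth false v k.
    by move=> k Hk; rewrite add0n (rep_prefix Hr (n := 5)).
  have Fv := factor_eq Hv.
  have P1 : pfb (pref w 5) := SF_pfb 0 5 Hw.
  have P2 : pfb v by rewrite -Fv; exact: SF_pfb.
  rewrite P1 P2 /= /consistent => /negP H c; exfalso; apply: H; apply/eqP; apply: (@eq_from_nth _ false).
    by rewrite !size_take_min size_factor; lia.
  move=> k; rewrite size_take_min size_factor => Hk.
  rewrite !nth_take ?nth_factor //; try lia. apply: Hv; lia.
Qed.

Definition kmu (phi : morphism) : morphism := fun c => phi c ++ phi (~~ c).

Lemma ms_mu phi w : (forall k, w k.*2.+1 = ~~ w k.*2) ->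
  forall j, ms (kmu phi) (subw 0 w) j = ms phi w j.*2.
Proof.
move=> Hal; elim=> // j IH.
rewrite msS IH doubleS !msS Hal /kmu size_cat addnA.
by rewrite /subw add0n.
Qed.

Lemma rep_mu phi w z : rep phi w z -> (forall k, w k.*2.+1 = ~~ w k.*2) ->
  rep (kmu phi) (subw 0 w) z.
Proof.
move=> Hr Hal j k; rewrite ms_mu // /kmu size_cat nth_cat /subw add0n => Hk.
case: ifP => H; first by rewrite Hr.
have := Hr j.*2.+1 (k - size (phi (w j.*2))); rewrite Hal msS.
rewrite -addnA subnKC; last by rewrite leqNgt H.
by move=> HH; rewrite HH //; lia.
Qed.

Lemma pref_mu w n : (forall k, w k.*2.+1 = ~~ w k.*2) ->
  pref w n.*2 = mu (pref (subw 0 w) n).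
Proof.
move=> Hal; apply: (@eq_from_nth _ false).
  by rewrite size_mu !size_factor.
move=> k; rewrite size_factor => Hk.
rewrite nth_mu ?size_factor // !nth_factor //; last first.
  by rewrite ltn_half_double.
rewrite /subw !add0n -{1}[k](odd_double_half k).
by case: (odd k) => //=; rewrite add1n Hal.
Qed.

Lemma iter_pref k : forall w K, SF w -> rep K w w -> (forall c, 0 < size (K c)) ->
  ~ is_identity K -> pref w (2 ^ k) = iter k mu [:: w 0].
Proof.
elim: k => [|k IH] w K Hw Hr Hne Hid.
  by rewrite /pref /factor /mkseq /= addn0.
have He := even_fp Hw Hr Hne Hid.
case: (halving Hw Hw Hr Hne He) => [[Hz' [Hr' [_ Hal]]] | [Hz' [Hr' Hl']]]; last first.
  exfalso; apply: (@main_ne _ (phis 1 K) w (subw 1 w) (leqnn _) Hw Hz' Hr' _ Hl').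
  move=> c; rewrite size_sub; have := He c; have := Hne c.
  by case: (size (K c)) => [|[|m]].
have Hne2 : forall c, 0 < size (kmu (phis 0 K) c).
  move=> c; rewrite /kmu size_cat size_sub; have := He c; have := Hne c.
  by case: (size (K c)) => [|[|m]].
have Hr2 := rep_mu Hr' Hal.
have Hid2 : ~ is_identity (kmu (phis 0 K)).
  move=> /(_ false) /(f_equal size); rewrite /kmu size_cat !size_sub.
  move: (He false) (Hne false) (He true) (Hne true).
  case: (size (K false)) => [|[|a]] //; case: (size (K true)) => [|[|b]] //= _ _ _ _.
  by rewrite addSn addnS.
have := IH _ _ Hz' Hr2 Hne2 Hid2.
rewrite expnS mul2n pref_mu // => ->.
by rewrite iterS.
Qed.

Lemma fp_rep K w : (forall n, prefix (morph_apply K (pref w n))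
                    (pref w (size (morph_apply K (pref w n))))) -> rep K w w.
Proof.
move=> Hp j k Hk.
have := Hp j.+1; rewrite prefixE take_oversize => [/eqP E|]; last by rewrite /pref size_factor.
have Hl : ms K w j + k < size (morph_apply K (pref w j.+1)).
  by rewrite pref_S ma_rcons size_cat /ms; lia.
have := f_equal (fun s => nth false s (ms K w j + k)) E => /=.
rewrite nth_factor // add0n => ->.
by rewrite pref_S ma_rcons nth_cat /ms ltnNge leq_addr /= addKn.
Qed.

Lemma ma_erase K c s : K c = [::] ->
  morph_apply K s = flatten (nseq (count_mem (~~ c) s) (K (~~ c))).
Proof.
move=> Hc; elim: s => // a s IH.
rewrite /morph_apply /= -/(morph_apply K s) IH.
case: (eqVneq a c) => [->|Hac]; first by rewrite Hc /= eq_sym; case: c Hc {IH}.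
have -> : a = ~~ c by case: a c Hac {IH Hc} => [] [].
by rewrite eqxx.
Qed.

Lemma nonerasing K w : SF w -> rep K w w -> (forall m, exists n, m <= ms K w n) ->
  forall c, 0 < size (K c).
Proof.
move=> Hw Hr Hub c; rewrite lt0n; apply/negP => /eqP /size0nil Hc.
have Hms : forall n, ms K w n = size (flatten (nseq (count_mem (~~ c) (pref w n)) (K (~~ c)))).
  by move=> n; rewrite /ms (ma_erase _ Hc).
case E: (size (K (~~ c))) => [|p].
  have [n Hn] := Hub 1; move: Hn; rewrite Hms size_flat_nseq E muln0.
  by [].
have [n Hn] := Hub (3 * p.+1).
apply: (Hw 0 (3 * p.+1) (3%:Q)%R).
  rewrite -!pmulrn ler_pdivrMr ?ltr0n // -natrM ler_nat //.
exists (K (~~ c)), 3, [::]; split.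
- by rewrite E.
- by rewrite prefix0s.
- rewrite cats0; apply: (@eq_from_nth _ false).
    by rewrite size_factor size_flat_nseq E mulnC.
  move=> k; rewrite size_factor => Hk.
  rewrite nth_factor // add0n (rep_prefix Hr (n := n)); last by lia.
  rewrite (ma_erase _ Hc) !nth_flat_nseq ?E //; last first.
    by move: Hn; rewrite Hms size_flat_nseq E; lia.
  by rewrite /= mul0r addr0.
Qed.

Lemma size_iter a m : size (iter m mu [:: a]) = 2 ^ m.
Proof. by elim: m => // m IH; rewrite iterS size_mu IH expnS mul2n. Qed.

Lemma iter_ext a m : exists t, iter m.+1 mu [:: a] = iter m mu [:: a] ++ t.
Proof.
elim: m => [|m [t IH]]; first by exists [:: ~~ a].
by exists (mu t); rewrite iterS {1}IH mu_cat.
Qed.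

Lemma iter_stab a m m' i : i < 2 ^ m -> m <= m' ->
  nth false (iter m' mu [:: a]) i = nth false (iter m mu [:: a]) i.
Proof.
move=> Hi; elim: m' => [|m' IH] Hm.
  by have -> : m = 0 by lia.
case: (leqP m m') => H; last by have -> : m = m'.+1 by lia.
have [t ->] := iter_ext a m'.
rewrite nth_cat size_iter ifT ?IH //.
by apply: leq_trans Hi _; rewrite leq_exp2l.
Qed.

Lemma nth_iterS a m k : k < (2 ^ m).*2 ->
  nth false (iter m.+1 mu [:: a]) k =
  if odd k then ~~ nth false (iter m mu [:: a]) k./2 else nth false (iter m mu [:: a]) k./2.
Proof. by move=> Hk; rewrite iterS nth_mu // size_iter. Qed.

Lemma lt_exp i : i < 2 ^ i.
Proof. exact: (ltn_expl i (isT : 1 < 2)). Qed.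

Lemma T_mu a i : mu_omega a i.*2 = mu_omega a i /\ mu_omega a i.*2.+1 = ~~ mu_omega a i.
Proof.
rewrite /mu_omega.
have L1 : i.*2 < 2 ^ i.*2.+1 by apply: (leq_trans (lt_exp _)); rewrite leq_exp2l.
have L2 : i.*2.+1 < 2 ^ i.*2.+2 by apply: (leq_trans (lt_exp _)); rewrite leq_exp2l.
have L3 : i.*2.+1 < (2 ^ i.+1).*2 by have := lt_exp i.+1; lia.
set M := i.*2.+3.
have A1 : nth false (iter i.*2.+1 mu [:: a]) i.*2 = nth false (iter M mu [:: a]) i.*2.
  by rewrite (@iter_stab a i.*2.+1 M) //; rewrite /M; lia.
have A2 : nth false (iter i.*2.+2 mu [:: a]) i.*2.+1 = nth false (iter M mu [:: a]) i.*2.+1.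
  by rewrite (@iter_stab a i.*2.+2 M) //; rewrite /M; lia.
have A3 : nth false (iter i.+2 mu [:: a]) i.*2 = nth false (iter M mu [:: a]) i.*2.
  by rewrite (@iter_stab a i.+2 M) //; [rewrite expnS; have := lt_exp i.+1; lia | rewrite /M; lia].
have A4 : nth false (iter i.+2 mu [:: a]) i.*2.+1 = nth false (iter M mu [:: a]) i.*2.+1.
  by rewrite (@iter_stab a i.+2 M) //; [rewrite expnS; have := lt_exp i.+1; lia | rewrite /M; lia].
rewrite A1 A2 -A3 -A4 (@nth_iterS a i.+1 i.*2) ?(@nth_iterS a i.+1 i.*2.+1) //; last by lia.
by rewrite /= odd_double doubleK uphalf_double.
Qed.

Lemma T_fp a : fixed_point (fun b => [:: b; ~~ b]) (mu_omega a).
Proof.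
have E : forall n, morph_apply (fun b => [:: b; ~~ b]) (pref (mu_omega a) n) = pref (mu_omega a) n.*2.
  move=> n; apply: (@eq_from_nth _ false).
    by rewrite -/(mu _) size_mu !size_factor.
  move=> k; rewrite -/(mu _) size_mu size_factor => Hk.
  rewrite nth_mu ?size_factor // !nth_factor ?add0n //; last by rewrite ltn_half_double.
  have [E1 E2] := T_mu a k./2.
  rewrite -[in RHS](odd_double_half k); case: (odd k) => /=.
    by rewrite add1n E2.
  by rewrite add0n E1.
split.
  by move=> n; rewrite E size_factor prefix_refl.
move=> m; exists m; rewrite E size_factor -addnn; lia.
Qed.

Unset Implicit Arguments.
Set Strict Implicit.

Theorem corollary11 (w : iword) :
  power_free (7%:Q / 3%:Q)%R w ->
  ((exists h : morphism, ~ is_identity h /\ fixed_point h w) <->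
   (w = mu_omega false \/ w = mu_omega true)).
Proof.
move=> Hw; split.
- move=> [K [Hid [Hp Hub]]].
  have Hr := fp_rep Hp.
  have Hne := nonerasing Hw Hr Hub.
  have Hw' : w = mu_omega (w 0).
    apply: functional_extensionality => i.
    have E := iter_pref i.+1 Hw Hr Hne Hid.
    have Hi : i < 2 ^ i.+1 by rewrite expnS; have := lt_exp i; lia.
    by rewrite /mu_omega -E nth_factor ?add0n.
  by case: (w 0) Hw' => Hw'; [right | left].
- case=> -> ; exists (fun b => [:: b; ~~ b]); split; try exact: T_fp;
  by move=> /(_ false) H; discriminate H.
Qed.
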